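(* Let $H$ and $K$ be $2$-connected cubic graphs. If $\pi(H)=4$ and $K$ is $3$-edge-colourable, then $\pi(H\oplus_2 K)=4$ and $\pi(H\oplus_3 K)=4$ for any choice of distinguished edges or vertices.
   Context: Graphs are finite; loops and multiple edges are allowed. For a bridgeless cubic graph $G$, the perfect matching index $\pi(G)$ is the smallest number of perfect matchings of $G$ whose union is $E(G)$. A $2$-sum $H\oplus_2 K$ of $2$-connected cubic graphs $H,K$ with distinguished edges $e\in E(H)$, $f\in E(K)$ is obtained by deleting $e$ and $f$ and joining the two $2$-valent vertices of $H-e$ to the two $2$-valent vertices of $K-f$ by two new independent edges. A $3$-sum $H\oplus_3 K$ with distinguished vertices $u\in V(H)$, $v\in V(K)$ is obtained by deleting $u$ and $v$ and joining the three dangling edge-ends formerly incident with $u$ bijectively to the three dangling edge-ends formerly incident with $v$, forming three new edges. *)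

(* Defs.v *)
From mathcomp Require Import all_boot.
Set Implicit Arguments. Unset Strict Implicit. Unset Printing Implicit Defensive.

(* A finite graph: a finite vertex type, a finite edge type, and for each edge
   its two ends [ends e false] and [ends e true]; a loop has equal ends,
   parallel edges are distinct edges with the same ends. A pair (e, b) is a
   dart (edge-end) of e; it is incident with the vertex [ends e b]. *)
Record graph := Graph {
  gV : finType;
  gE : finType;
  ends : gE -> bool -> gV
}.

Section GraphDefs.
Variable G : graph.

(* darts at x; a loop at x contributes two darts *)
Definition darts_at (x : gV G) : {set gE G * bool} :=
  [set d : gE G * bool | ends d.1 d.2 == x].

Definition cubic : Prop := forall x : gV G, #|darts_at x| = 3.

Definition adj : rel (gV G) :=
  fun x y => [exists e : gE G, exists b : bool,
                (ends e b == x) && (ends e (~~ b) == y)].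

Definition connected : Prop := forall x y : gV G, connect adj x y.

Definition adj_minus (w : gV G) : rel (gV G) :=
  fun x y => [&& x != w, y != w & adj x y].

Definition two_connected : Prop :=
  [/\ 2 <= #|gV G|, connected &
      forall w x y : gV G, x != w -> y != w -> connect (adj_minus w) x y].

(* a perfect matching: every vertex is incident with exactly one edge-end of
   an edge of M (so loops never belong to M) *)
Definition perfect_matching (M : {set gE G}) : Prop :=
  forall x : gV G, #|[set d in darts_at x | d.1 \in M]| = 1.

Definition pm_cover (k : nat) : Prop :=
  exists Ms : 'I_k -> {set gE G},
    (forall i, perfect_matching (Ms i)) /\ (forall e : gE G, exists i, e \in Ms i).

Definition pm_index (n : nat) : Prop :=
  pm_cover n /\ forall m, m < n -> ~ pm_cover m.

(* proper 3-edge-colouring: two distinct darts at the same vertex get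
   distinct colours (a loop thus forbids colourability) *)
Definition three_edge_colourable : Prop :=
  exists c : gE G -> 'I_3, forall d1 d2 : gE G * bool,
    d1 != d2 -> ends d1.1 d1.2 = ends d2.1 d2.2 -> c d1.1 != c d2.1.

End GraphDefs.

Section TwoSum.
Variables (H K : graph) (e : gE H) (f : gE K) (s : bool).

Definition sum2_E : finType := ({x : gE H | x != e} + {y : gE K | y != f} + bool)%type.

(* new edge b joins ends e b with ends f (b (+) s); [s] selects one of the
   two possible ways of joining *)
Definition sum2_ends (g : sum2_E) (b : bool) : (gV H + gV K)%type :=
  match g with
  | inl (inl x) => inl (ends (val x) b)
  | inl (inr y) => inr (ends (val y) b)
  | inr c => if b then inr (ends f (addb c s)) else inl (ends e c)
  end.

Definition sum2 : graph := @Graph (gV H + gV K)%type sum2_E sum2_ends.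
End TwoSum.

Section ThreeSum.
Variables (H K : graph) (u : gV H) (v : gV K).

Definition dangling (G : graph) (w : gV G) : pred (gE G * bool) :=
  fun d => (ends d.1 d.2 == w) && (ends d.1 (~~ d.2) != w).

Definition Dang (G : graph) (w : gV G) : finType := {d : gE G * bool | dangling w d}.

Definition avoid (G : graph) (w : gV G) : pred (gE G) :=
  fun x => (ends x false != w) && (ends x true != w).

Definition Vm (G : graph) (w : gV G) : finType := {x : gV G | x != w}.

Lemma avoid_end (G : graph) (w : gV G) (x : {x : gE G | avoid w x}) (b : bool) :
  ends (val x) b != w.
Proof. by case: x => x /= /andP[h1 h2]; case: b. Qed.

Lemma dang_end (G : graph) (w : gV G) (d : Dang w) :
  ends (val d).1 (~~ (val d).2) != w.
Proof. by case: d => d /= /andP[]. Qed.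

Definition old_end (G : graph) (w : gV G) (x : {x : gE G | avoid w x}) (b : bool)
  : Vm w := exist _ (ends (val x) b) (avoid_end x b).

Definition far_end (G : graph) (w : gV G) (d : Dang w) : Vm w :=
  exist _ (ends (val d).1 (~~ (val d).2)) (dang_end d).

Variable phi : Dang u -> Dang v.

Definition sum3_E : finType :=
  ({x : gE H | avoid u x} + {y : gE K | avoid v y} + Dang u)%type.

(* the new edge indexed by a dangling end d at u joins the far end of d with
   the far end of phi d *)
Definition sum3_ends (g : sum3_E) (b : bool) : (Vm u + Vm v)%type :=
  match g with
  | inl (inl x) => inl (old_end x b)
  | inl (inr y) => inr (old_end y b)
  | inr d => if b then inr (far_end (phi d)) else inl (far_end d)
  end.

Definition sum3 : graph := @Graph (Vm u + Vm v)%type sum3_E sum3_ends.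
End ThreeSum.

(* Main.v *)
Require Import Defs.
From mathcomp Require Import all_boot.
From mathcomp Require Import zify.
Set Implicit Arguments. Unset Strict Implicit. Unset Printing Implicit Defensive.

Section Generic.
Variable G : graph.
Implicit Types (M : {set gE G}) (x : gV G).

Lemma pm_two M x d1 d2 : perfect_matching M ->
  d1 \in darts_at x -> d2 \in darts_at x -> d1.1 \in M -> d2.1 \in M -> d1 = d2.
Proof.
move=> pm h1 h2 m1 m2; apply/eqP/negPn/negP => ne.
have := pm x.
have sub : [set d1; d2] \subset [set d in darts_at x | d.1 \in M].
  rewrite inE in h1; rewrite inE in h2.
  by apply/subsetP => d; rewrite !inE => /orP[] /eqP ->; rewrite ?h1 ?h2 ?m1 ?m2.
have := subset_leq_card sub; rewrite cards2 ne => /[swap] ->. by [].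
Qed.

Lemma pm_exists M x : perfect_matching M -> exists2 d, d \in darts_at x & d.1 \in M.
Proof.
move=> pm; have /eqP/cards1P[d hd] := pm x.
have : d \in [set d in darts_at x | d.1 \in M] by rewrite hd set11.
by rewrite inE => /andP[]; exists d.
Qed.

Lemma pm_noloop M g : perfect_matching M -> g \in M -> ends g false != ends g true.
Proof.
move=> pm gM; apply/negP => /eqP E.
have := @pm_two M (ends g false) (g,false) (g,true) pm.
by rewrite !inE /= E eqxx gM => /(_ isT isT isT isT).
Qed.

Lemma cover_at m (Ms : 'I_m -> {set gE G}) x :
  (forall i, perfect_matching (Ms i)) -> (forall g, exists i, g \in Ms i) ->
  #|darts_at x| = 3 ->
  3 <= m /\ (m = 3 -> forall d, d \in darts_at x -> #|[set i | d.1 \in Ms i]| = 1).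
Proof.
move=> pm cov c3.
have E : \sum_(d in darts_at x) #|[set i | d.1 \in Ms i]| = m.
  under eq_bigr => d _ do rewrite -sum1dep_card big_mkcond /=.
  rewrite exchange_big /=.
  transitivity (\sum_(i < m) 1); last by rewrite sum1_card card_ord.
  apply: eq_bigr => i _.
  by rewrite -big_mkcondr /= sum1dep_card; exact: pm i x.
have ge1 : forall d : gE G * bool, #|[set i | d.1 \in Ms i]| = 1 + (#|[set i | d.1 \in Ms i]|).-1.
  move=> d; have [i hi] := cov d.1.
  have : 0 < #|[set i | d.1 \in Ms i]| by apply/card_gt0P; exists i; rewrite inE.
  by case: #|_|.
move: E; under eq_bigr => d _ do rewrite ge1.
rewrite big_split /= sum1_card c3 => E.
split; first by rewrite -E leq_addr.
move=> m3 d hd; have /eqP := etrans E m3; rewrite -{2}[3]addn0 eqn_add2l sum_nat_eq0.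
by move=> /forallP /(_ d); rewrite hd /= => /eqP h; rewrite ge1 h.
Qed.

Lemma sum_darts M (S : {set gV G}) :
  \sum_(x in S) #|[set d in darts_at x | d.1 \in M]| =
  \sum_(g in M) ((ends g false \in S) + (ends g true \in S)).
Proof.
transitivity (\sum_(d | (d.1 \in M) && (ends d.1 d.2 \in S)) 1).
  rewrite (partition_big (fun d : gE G * bool => ends d.1 d.2) (mem S)); last by move=> d /andP[].
  apply: eq_bigr => x xS; rewrite sum1dep_card; apply: eq_card => d.
  by rewrite !inE; case: eqP => [->|]; rewrite ?xS ?andbT ?andbF //.
transitivity (\sum_(d | (d.1 \in M) && xpredT d.2) ((ends d.1 d.2 \in S) : nat)).
  rewrite big_mkcondr /= [RHS](eq_bigl (fun d => d.1 \in M)); last by move=> d; rewrite andbT.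
  by apply: eq_bigr => d _; case: (_ \in S).
rewrite -(pair_big (fun g => g \in M) xpredT (fun g b => ((ends g b \in S) : nat))).
by apply: eq_bigr => g _ /=; rewrite big_bool /= addnC.
Qed.

Lemma parity_pm M (S : {set gV G}) : perfect_matching M ->
  odd #|S| = odd (\sum_(g in M) ((ends g false \in S) != (ends g true \in S))).
Proof.
move=> pm.
have E : #|S| = \sum_(g in M) ((ends g false \in S) + (ends g true \in S)).
  by rewrite -sum_darts -sum1_card; apply: eq_bigr => x _; rewrite pm.
rewrite E.
have pw : forall a b : bool, a + b = 2 * (a && b) + (a != b) by case; case.
under eq_bigr => g _ do rewrite pw.
by rewrite big_split /= -big_distrr /= oddD oddM.
Qed.
End Generic.

Lemma inSD (T : finType) (A : {set T}) (P : pred T) d :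
  (d \in [set d in A | P d]) = (d \in A) && P d.
Proof. by rewrite inE. Qed.

Lemma transfer (G1 G2 : graph) (x1 : gV G1) (x2 : gV G2) (M1 : {set gE G1})
  (M2 : {set gE G2}) (h : gE G1 * bool -> gE G2 * bool) (k : gE G2 * bool -> gE G1 * bool) :
 (forall d, d \in darts_at x1 ->
    [/\ h d \in darts_at x2, k (h d) = d & ((h d).1 \in M2) = (d.1 \in M1)]) ->
 (forall d, d \in darts_at x2 -> k d \in darts_at x1 /\ h (k d) = d) ->
 #|[set d in darts_at x1 | d.1 \in M1]| = #|[set d in darts_at x2 | d.1 \in M2]|.
Proof.
move=> H1 H2.
have -> : [set d in darts_at x2 | d.1 \in M2] = h @: [set d in darts_at x1 | d.1 \in M1].
  apply/setP => d; apply/idP/imsetP.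
    rewrite inSD => /andP[dx dM]; have [kx hk] := H2 d dx.
    exists (k d) => //; rewrite inSD kx /=.
    by have [_ _ <-] := H1 _ kx; rewrite hk.
  move=> [d' ]; rewrite !inSD => /andP[dx dM] ->.
  by have [hx _ hM] := H1 _ dx; rewrite hx hM.
rewrite card_in_imset // => a b; rewrite inSD => /andP[ax _]; rewrite inSD => /andP[bx _] E.
by have [_ ka _] := H1 _ ax; have [_ kb _] := H1 _ bx; rewrite -ka -kb E.
Qed.

Definition proper_col (K : graph) (col : gE K -> 'I_3) :=
  forall d1 d2 : gE K * bool, d1 != d2 -> ends d1.1 d1.2 = ends d2.1 d2.2 -> col d1.1 != col d2.1.

Lemma colour_at (K : graph) (col : gE K -> 'I_3) y c : cubic K -> proper_col col ->
  exists2 d, d \in darts_at y & col d.1 = c.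
Proof.
move=> cub pr.
have inj : {in darts_at y &, injective (fun d : gE K * bool => col d.1)}.
  move=> a b; rewrite !inE => /eqP ay /eqP b_y E; apply/eqP/negPn/negP => ne.
  by have := pr a b ne; rewrite ay b_y E eqxx => /(_ erefl).
have : (fun d : gE K * bool => col d.1) @: darts_at y == setT.
  by rewrite eqEcard subsetT card_in_imset // cardsT card_ord cub.
move/eqP => E; have : c \in setT by rewrite inE.
by rewrite -E => /imsetP[d dy ->]; exists d.
Qed.

Lemma class_pm (K : graph) (col : gE K -> 'I_3) c : cubic K -> proper_col col ->
  perfect_matching [set g | col g == c].
Proof.
move=> cub pr y; have [d dy dc] := colour_at y c cub pr.
apply/eqP/cards1P; exists d; apply/setP => d'; rewrite !inE.
have dy' := dy; rewrite inE in dy'.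
apply/andP/eqP => [[d'y /eqP cd']|->]; last by rewrite dy' dc eqxx.
apply/eqP/negPn/negP => ne; have := pr d' d ne.
by move: dy' d'y => /eqP -> /eqP ->; rewrite cd' dc eqxx => /(_ erefl).
Qed.

Lemma even_V (K : graph) (col : gE K -> 'I_3) : cubic K -> proper_col col -> ~~ odd #|gV K|.
Proof.
move=> cub pr; have pm := class_pm ord0 cub pr.
rewrite -cardsT (parity_pm setT pm).
by rewrite big1 // => g _; rewrite !inE.
Qed.

Lemma three_cols (cf : 'I_3) : exists c1 c2 : 'I_3,
  [/\ c1 != cf, c2 != cf, c1 != c2 & forall c : 'I_3, [|| c == cf, c == c1 | c == c2]].
Proof.
case: cf => [[|[|[|?]]] ?] //.
- exists (@Ordinal 3 1 isT), (@Ordinal 3 2 isT); split => // -[[|[|[|?]]] ?] //.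
- exists (@Ordinal 3 0 isT), (@Ordinal 3 2 isT); split => // -[[|[|[|?]]] ?] //.
- exists (@Ordinal 3 0 isT), (@Ordinal 3 1 isT); split => // -[[|[|[|?]]] ?] //.
Qed.

Lemma card_setT_darts (G : graph) (x : gV G) :
  #|[set d in darts_at x | d.1 \in [set: gE G]]| = #|darts_at x|.
Proof. by apply: eq_card => d; rewrite inSD in_setT andbT. Qed.


Section S2.
Variables (H K : graph) (e : gE H) (f : gE K) (s : bool).
Local Notation G' := (sum2 e f s).

Lemma tr2H (x : gV H) (M' : {set gE G'}) (M : {set gE H}) :
  (forall y : {g | g != e}, (inl (inl y) \in M') = (val y \in M)) ->
  (forall c, (inr c \in M') = (e \in M)) ->
  #|[set d in darts_at (G:=G') (inl x) | d.1 \in M']| = #|[set d in darts_at x | d.1 \in M]|.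
Proof.
move=> hy hc.
apply: (transfer (h := fun d : gE G' * bool => match d.1 with inl (inl y) => (val y, d.2) | inr c => (e, c) | _ => (e, d.2) end)
 (k := fun d : gE H * bool => match insub d.1 with Some y => (inl (inl y) : gE G', d.2) | None => (inr d.2, false) end)).
- move=> [[[y|y]|c] b]; rewrite inE /=.
  + by move=> /eqP[E]; rewrite inE /= E eqxx valK hy.
  + by move=> /eqP.
  + case: b => /eqP // [E].
    by rewrite inE /= E eqxx insubF ?eqxx // hc.
- move=> [g b]; rewrite inE /= => /eqP gx; case: insubP => [y ne vy|ne] /=.
  + by rewrite inE /= vy gx.
  + by move/negPn/eqP: ne => ge; subst g; rewrite inE /= gx.
Qed.

Lemma tr2K (x : gV K) (M' : {set gE G'}) (N : {set gE K}) :
  (forall y : {g | g != f}, (inl (inr y) \in M') = (val y \in N)) ->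
  (forall c, (inr c \in M') = (f \in N)) ->
  #|[set d in darts_at (G:=G') (inr x) | d.1 \in M']| = #|[set d in darts_at x | d.1 \in N]|.
Proof.
move=> hy hc.
apply: (transfer (h := fun d : gE G' * bool => match d.1 with inl (inr y) => (val y, d.2) | inr c => (f, c (+) s) | _ => (f, d.2) end)
 (k := fun d : gE K * bool => match insub d.1 with Some y => (inl (inr y) : gE G', d.2) | None => (inr (d.2 (+) s), true) end)).
- move=> [[[y|y]|c] b]; rewrite inE /=.
  + by move=> /eqP.
  + by move=> /eqP[E]; rewrite inE /= E eqxx valK hy.
  + case: b => /eqP // [E].
    by rewrite inE /= E eqxx insubF ?eqxx // hc addbK.
- move=> [g b]; rewrite inE /= => /eqP gx; case: insubP => [y ne vy|ne] /=.
  + by rewrite inE /= vy gx.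
  + by move/negPn/eqP: ne => ge; subst g; rewrite inE /= addbK gx.
Qed.


Definition lift2 (M : {set gE H}) (N : {set gE K}) : {set gE G'} :=
  [set g : gE G' | match g with inl (inl y) => val y \in M | inl (inr z) => val z \in N
                   | inr _ => e \in M end].

Lemma lift2_pm M N : perfect_matching M -> perfect_matching N -> (e \in M) = (f \in N) ->
  perfect_matching (lift2 M N).
Proof.
move=> pM pN ef [x|x].
- by rewrite (@tr2H x _ M) ?pM // => [y|c]; rewrite inE.
- by rewrite (@tr2K x _ N) ?pN // => [y|c]; rewrite inE.
Qed.

Definition SK : {set gV G'} := [set inr y | y : gV K].

Lemma SK_inl x : (inl x \in SK) = false.
Proof. by apply/imsetP => -[y _]. Qed.
Lemma SK_inr y : (inr y \in SK) = true.
Proof. by apply: imset_f. Qed.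

Lemma parity2 (M' : {set gE G'}) : ~~ odd #|gV K| -> perfect_matching M' ->
  (inr false \in M') = (inr true \in M').
Proof.
move=> ev pm; have := parity_pm SK pm.
rewrite card_imset; last by move=> a b [].
rewrite (negbTE ev) big_mkcond big_sumType big_sumType /= big_bool /=.
rewrite big1; last by move=> y _; rewrite !SK_inl; case: ifP.
rewrite big1; last by move=> y _; rewrite !SK_inr; case: ifP.
rewrite !SK_inl !SK_inr /=.
by case: (inr true \in M'); case: (inr false \in M').
Qed.

Definition restr2 (M' : {set gE G'}) : {set gE H} :=
  [set g | if insub g is Some y then inl (inl y) \in M' else inr false \in M'].

Lemma restr2_pm M' : ~~ odd #|gV K| -> perfect_matching M' -> perfect_matching (restr2 M').
Proof.
move=> ev pm x; rewrite -(@tr2H x M') ?pm //.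
- by move=> y; rewrite inE valK.
- move=> c; rewrite inE insubF ?eqxx //; case: c => //.
  by rewrite parity2.
Qed.

Lemma cover2_down m : ~~ odd #|gV K| -> pm_cover G' m -> pm_cover H m.
Proof.
move=> ev [Ms [pm cov]]; exists (fun i => restr2 (Ms i)); split.
  by move=> i; apply: restr2_pm.
move=> g.
have [i hi] := cov (if insub g is Some y then inl (inl y) else inr false : gE G').
by exists i; rewrite inE; move: hi; case: insub.
Qed.


Lemma cover2_up (col : gE K -> 'I_3) : cubic H -> cubic K -> proper_col col ->
  pm_cover H 4 -> pm_cover G' 4.
Proof.
move=> cH cK pr [Ms [pm cov]].
have [i0 he] := cov e.
have nl := pm_noloop (pm i0) he.
set a := ends e false.
have ea : (e, false) \in darts_at a by rewrite inE.
have c3 := cH a; rewrite (cardsD1 (e,false)) ea in c3.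
have : #|darts_at a :\ (e, false)| == 2 by rewrite -(eqn_add2l 1) c3.
move=> /cards2P[d1 [d2 [ne12 D12]]].
have hd : forall d, d \in [set d1; d2] -> [/\ d \in darts_at a, d != (e, false) & d.1 != e].
  move=> d; rewrite -D12 !inE => /andP[ne /eqP da]; split => //; first by rewrite da.
  apply/eqP => de; move: ne da; case: d de => g b /= ->.
  case: b => [_ E|]; last by rewrite eqxx.
  by move: nl; rewrite E /a eqxx.
have [d1a d1ne d1e] := hd d1 (set21 _ _).
have [d2a d2ne d2e] := hd d2 (set22 _ _).
have [i1 h1] := cov d1.1; have [i2 h2] := cov d2.1.
have ne1 : e \notin Ms i1.
  by apply/negP => eM; move/eqP: d1ne; apply; exact: (pm_two (pm i1) d1a ea h1 eM).
have ne2 : e \notin Ms i2.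
  by apply/negP => eM; move/eqP: d2ne; apply; exact: (pm_two (pm i2) d2a ea h2 eM).
have i12 : i2 != i1.
  by apply/eqP => E; move/eqP: ne12; apply; apply: (pm_two (pm i1) d1a d2a) => //; rewrite -E.
have [c1 [c2 [c1f c2f c12 call]]] := three_cols (col f).
pose ci i := if e \in Ms i then col f else if i == i1 then c1 else c2.
exists (fun i => lift2 (Ms i) [set g | col g == ci i]); split.
  move=> i; apply: lift2_pm => //; first exact: class_pm.
  rewrite inE /ci; case: (e \in Ms i); first by rewrite eqxx.
  by case: (i == i1); rewrite eq_sym ?(negbTE c1f) ?(negbTE c2f).
move=> [[y|y]|c].
- by have [i hi] := cov (val y); exists i; rewrite inE.
- have := call (col (val y)); case/or3P => /eqP cy.
  + by exists i0; rewrite !inE /ci he cy.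
  + by exists i1; rewrite !inE /ci (negbTE ne1) eqxx cy.
  + by exists i2; rewrite !inE /ci (negbTE ne2) (negbTE i12) cy.
- by exists i0; rewrite inE.
Qed.

End S2.


Lemma dang_inj (G : graph) (w : gV G) (d d' : Dang w) : (val d).1 = (val d').1 -> d = d'.
Proof.
case: d => [[g b] hb]; case: d' => [[g' b'] hb'] /= E; subst g'.
apply: val_inj => /=; congr pair.
move: hb hb'; rewrite /dangling /= => /andP[/eqP h1 h2] /andP[/eqP h1' h2'].
by case: b b' h1 h2 h1' h2' => -[] // h1 h2 h1' h2'; move: h2 h2'; rewrite ?h1 ?h1' eqxx.
Qed.

Lemma not_avoid_dang (G : graph) (w : gV G) (d : Dang w) : avoid w (val d).1 = false.
Proof.
case: d => [[g b] /andP[/eqP h1 _]] /=; rewrite /avoid.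
by case: b h1 => /= ->; rewrite eqxx ?andbF.
Qed.

Section S3.
Variables (H K : graph) (u : gV H) (v : gV K) (phi : Dang u -> Dang v) (psi : Dang v -> Dang u).
Hypotheses (phiK : cancel phi psi) (psiK : cancel psi phi).
Local Notation G' := (sum3 phi).

Lemma tr3H (e0 : gE H) (g0 : gE G') (x : Vm u) (M' : {set gE G'}) (M : {set gE H}) :
  (forall y : {g | avoid u g}, (inl (inl y) \in M') = (val y \in M)) ->
  (forall d : Dang u, (inr d \in M') = ((val d).1 \in M)) ->
  #|[set d in darts_at (G:=G') (inl x) | d.1 \in M']| = #|[set d in darts_at (val x) | d.1 \in M]|.
Proof.
move=> hy hd.
apply: (transfer (h := fun d : gE G' * bool => match d.1 with inl (inl y) => (val y, d.2)
   | inr d0 => ((val d0).1, ~~ (val d0).2) | _ => (e0, d.2) end)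
 (k := fun d : gE H * bool => match insub d.1 with Some y => (inl (inl y) : gE G', d.2)
   | None => match (insub (d.1, ~~ d.2) : option (Dang u)) with Some d0 => (inr d0, false)
             | None => (g0, false) end end)).
- move=> [[[y|y]|d0] b]; rewrite inE /=.
  + move=> /eqP[E]; rewrite inE /= -E eqxx valK hy; split => //.
  + by move=> /eqP.
  + case: b => /eqP // [E].
    rewrite inE /= -E eqxx insubF ?not_avoid_dang // hd; split => //.
    case: d0 {E} => [[g c] hc] /=; rewrite negbK (insubT _ hc) //.
- move=> [g b]; rewrite inE /= => /eqP gx; case: insubP => [y av vy|nav] /=.
  + split; last by rewrite vy.
    rewrite inE /=; apply/eqP; congr inl; apply: val_inj => /=; by rewrite vy.
  + have hc : dangling u (g, ~~ b).
      rewrite /dangling /= negbK gx (valP x) andbT.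
      move: nav; rewrite /avoid negb_and !negbK.
      have xu : val x != u := valP x; case: b gx => /= gx /orP[] // /eqP E; by move: xu; rewrite /= -gx E eqxx.
    rewrite (insubT _ hc) /= negbK; split => //.
    rewrite inE /=; apply/eqP; congr inl; apply: val_inj => /=; by rewrite negbK.
Qed.

Lemma tr3K (f0 : gE K) (g0 : gE G') (x : Vm v) (M' : {set gE G'}) (N : {set gE K}) :
  (forall y : {g | avoid v g}, (inl (inr y) \in M') = (val y \in N)) ->
  (forall d : Dang u, (inr d \in M') = ((val (phi d)).1 \in N)) ->
  #|[set d in darts_at (G:=G') (inr x) | d.1 \in M']| = #|[set d in darts_at (val x) | d.1 \in N]|.
Proof.
move=> hy hd.
apply: (transfer (h := fun d : gE G' * bool => match d.1 with inl (inr y) => (val y, d.2)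
   | inr d0 => ((val (phi d0)).1, ~~ (val (phi d0)).2) | _ => (f0, d.2) end)
 (k := fun d : gE K * bool => match insub d.1 with Some y => (inl (inr y) : gE G', d.2)
   | None => match (insub (d.1, ~~ d.2) : option (Dang v)) with Some d0 => (inr (psi d0), true)
             | None => (g0, false) end end)).
- move=> [[[y|y]|d0] b]; rewrite inE /=.
  + by move=> /eqP.
  + move=> /eqP[E]; rewrite inE /= -E eqxx valK hy; split => //.
  + case: b => /eqP // [E].
    rewrite inE /= -E eqxx insubF ?not_avoid_dang // hd; split => //.
    case Ep: (phi d0) => [[g c] hc] /=; rewrite negbK (insubT _ hc) /=.
    have -> : Sub (g, c) hc = phi d0 by rewrite Ep.
    by rewrite phiK.
- move=> [g b]; rewrite inE /= => /eqP gx; case: insubP => [y av vy|nav] /=.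
  + split; last by rewrite vy.
    rewrite inE /=; apply/eqP; congr inr; apply: val_inj => /=; by rewrite vy.
  + have hc : dangling v (g, ~~ b).
      rewrite /dangling /= negbK gx (valP x) andbT.
      move: nav; rewrite /avoid negb_and !negbK.
      have xu : val x != v := valP x; case: b gx => /= gx /orP[] // /eqP E; by move: xu; rewrite /= -gx E eqxx.
    rewrite (insubT _ hc) /= psiK /= negbK; split => //.
    rewrite inE /=; apply/eqP; congr inr; apply: val_inj => /=; by rewrite psiK /= negbK.
Qed.

Definition lift3 (M : {set gE H}) (N : {set gE K}) : {set gE G'} :=
  [set g : gE G' | match g with inl (inl y) => val y \in M | inl (inr z) => val z \in N
                   | inr d => (val d).1 \in M end].

Lemma lift3_pm (e0 : gE H) (f0 : gE K) (g0 : gE G') M N :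
  perfect_matching M -> perfect_matching N ->
  (forall d, ((val d).1 \in M) = ((val (phi d)).1 \in N)) ->
  perfect_matching (lift3 M N).
Proof.
move=> pM pN ef [x|x].
- by rewrite (@tr3H e0 g0 x _ M) ?pM // => [y|c]; rewrite inE.
- by rewrite (@tr3K f0 g0 x _ N) ?pN // => [y|c]; rewrite inE.
Qed.

Lemma cubic3 (e0 : gE H) (g0 : gE G') (x : Vm u) : cubic H -> #|darts_at (G:=G') (inl x)| = 3.
Proof.
move=> cH; rewrite -card_setT_darts (@tr3H e0 g0 x _ setT) ?card_setT_darts //.
- by move=> y; rewrite !inE.
- by move=> y; rewrite !inE.
Qed.

Definition restr3 (M' : {set gE G'}) : {set gE H} :=
  [set g | if insub g is Some y then inl (inl y) \in M'
           else [exists d : Dang u, ((val d).1 == g) && (inr d \in M')]].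

Lemma restr3_pm (e0 : gE H) (g0 : gE G') (M' : {set gE G'}) : perfect_matching M' ->
  #|[set d : Dang u | inr d \in M']| = 1 -> perfect_matching (restr3 M').
Proof.
move=> pm one x; case: (eqVneq x u) => [->|xu].
- rewrite -one -(card_imset _ val_inj); apply: eq_card => -[g b].
  rewrite inE inE /= inE; apply/andP/imsetP.
  + move=> [/eqP gu]; case: insubP => [y av _|_].
      by move: av; rewrite /avoid; case: b gu => /= ->; rewrite eqxx ?andbF.
    move=> /existsP[d /andP[/eqP dg dM]]; exists d; first by rewrite inE.
    case: d dg dM => [[g' b'] hb] /= E _; subst g'; congr pair.
    move: hb; rewrite /dangling /= => /andP[/eqP h1 h2].
    by case: b b' gu h1 h2 => -[] // gu h1; rewrite ?gu ?h1 eqxx.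
  + move=> [[[g' b'] hb]]; rewrite inE => dM [-> ->].
    move: (hb); rewrite /dangling /= => /andP[-> _]; split => //.
    rewrite insubF; last by exact: (not_avoid_dang (exist _ (g',b') hb)).
    by apply/existsP; exists (exist _ (g',b') hb); rewrite eqxx.
- have := pm (inl (exist _ x xu)); rewrite (@tr3H e0 g0 _ _ (restr3 M')) //.
  + by move=> y; rewrite inE valK.
  + move=> d; rewrite inE insubF ?not_avoid_dang //; apply/idP/existsP.
      by move=> dM; exists d; rewrite eqxx.
    by move=> [d' /andP[/eqP E dM]]; rewrite -(dang_inj E).
Qed.

Definition SK3 : {set gV G'} := [set inr y | y : Vm v].

Lemma SK3_inl x : (inl x \in SK3) = false.
Proof. by apply/imsetP => -[y _]. Qed.
Lemma SK3_inr y : (inr y \in SK3) = true.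
Proof. by apply: imset_f. Qed.

Lemma parity3 (M' : {set gE G'}) : ~~ odd #|gV K| -> perfect_matching M' ->
  odd #|[set d : Dang u | inr d \in M']|.
Proof.
move=> ev pm; have := parity_pm SK3 pm.
rewrite card_imset; last by move=> a b [].
have -> : #|Vm v| = #|gV K|.-1.
  by rewrite card_sig -(cardC1 v); apply: eq_card.
have : 0 < #|gV K| by apply/card_gt0P; exists v.
case: #|gV K| ev => // n; rewrite /= negbK => ev _; rewrite ev.
rewrite big_mkcond big_sumType big_sumType /=.
rewrite big1; last by move=> y _; rewrite !SK3_inl; case: ifP.
rewrite big1; last by move=> y _; rewrite !SK3_inr; case: ifP.
rewrite add0n add0n => E.
have -> : #|[set d | inr d \in M']| = \sum_d (if inr d \in M' then (
    (inl (far_end d) \in SK3) != (inr (far_end (phi d)) \in SK3) : nat) else 0).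
  by rewrite -sum1dep_card big_mkcond /=; apply: eq_bigr => d _; rewrite SK3_inl SK3_inr.
by rewrite -E.
Qed.

Lemma cardDang (nl : forall g : gE H, ends g false != ends g true) :
  cubic H -> #|Dang u| = 3.
Proof.
move=> cH; rewrite card_sig -(cH u); apply: eq_card => -[g b]; rewrite !inE /dangling /=.
case: eqP => //= <-; case: b; by rewrite ?(nl g) // eq_sym (nl g).
Qed.

Lemma dang_of (nl : forall g : gE H, ends g false != ends g true) g :
  avoid u g = false -> exists d : Dang u, (val d).1 = g.
Proof.
move=> nav; have [b hb] : exists b, ends g b == u.
  move: nav; rewrite /avoid; case: eqP => [E|_] /=; first by exists false; rewrite E.
  by move/negbFE => h; exists true.
have hd : dangling u (g, b).
  rewrite /dangling /= hb; move/eqP: hb => <-.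
  by case: b; rewrite ?(nl g) // eq_sym (nl g).
by exists (exist _ (g, b) hd).
Qed.

Lemma cover3_down (e0 : gE H) (g0 : gE G') (x0 : Vm u) m :
  (forall g : gE H, ends g false != ends g true) -> cubic H -> ~~ odd #|gV K| ->
  m < 4 -> pm_cover G' m -> pm_cover H 3.
Proof.
move=> nl cH ev m4 [Ms [pm cov]].
have [m3 _] := cover_at (x := inl x0 : gV G') pm cov (cubic3 e0 g0 x0 cH).
have em : m = 3 by apply/eqP; rewrite eqn_leq m3 -ltnS m4.
subst m.
have one_i : forall d : Dang u, #|[set i | inr d \in Ms i]| = 1.
  move=> d; have [_ h] := cover_at (x := inl (far_end d) : gV G') pm cov (cubic3 e0 g0 _ cH).
  by apply: (h erefl (inr d, false)); rewrite inE.
have tot : \sum_(i < 3) #|[set d : Dang u | inr d \in Ms i]| = 3.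
  transitivity (\sum_(d : Dang u) #|[set i | inr d \in Ms i]|).
    under eq_bigr => i _ do rewrite -sum1dep_card big_mkcond.
    rewrite exchange_big; apply: eq_bigr => d _.
    by rewrite -big_mkcond sum1dep_card.
  under eq_bigr => d _ do rewrite one_i.
  by rewrite sum1_card cardDang.
have one : forall i, #|[set d : Dang u | inr d \in Ms i]| = 1.
  move=> i; have od := parity3 ev (pm i).
  have pos : forall j, 0 < #|[set d : Dang u | inr d \in Ms j]|.
    by move=> j; have := parity3 ev (pm j); case: #|_|.
  rewrite (bigD1 i) //= in tot.
  set T := \sum_(j < 3 | _) _ in tot.
  have : 2 <= T.
    have h := @leq_sum _ (index_enum 'I_3) (fun j => j != i) (fun _ => 1) (fun j => #|[set d : Dang u | inr d \in Ms j]|) (fun j _ => pos j).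
    apply: leq_trans h.
    rewrite sum1dep_card (_ : [set j | j != i] = [set~ i]) ?cardsC1 ?card_ord //.
    by apply/setP => j; rewrite !inE.
  move: od tot; case: #|[set d : Dang u | inr d \in Ms i]| => [|[|k]] //= _; lia.
exists (fun i => restr3 (Ms i)); split; first by move=> i; apply: (restr3_pm e0 g0).
move=> g; case E: (insub g : option {x | avoid u x}) => [y|].
- by have [i hi] := cov (inl (inl y)); exists i; rewrite inE E.
- have nav : avoid u g = false.
    by apply/negP => av; rewrite (insubT _ av) in E.
  have [d dg] := dang_of nl nav.
  have [i hi] := cov (inr d); exists i; rewrite inE E.
  by apply/existsP; exists d; rewrite dg eqxx.
Qed.

Definition pickc (col : gE K -> 'I_3) (M : {set gE H}) : 'I_3 :=
  if [pick d : Dang u | (val d).1 \in M] is Some d then col (val (phi d)).1 else ord0.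

Lemma pm_dang (nl : forall g : gE H, ends g false != ends g true) (M : {set gE H}) : perfect_matching M ->
  exists d : Dang u, (val d).1 \in M /\ forall d', (val d').1 \in M -> d' = d.
Proof.
move=> pm; have [d0 d0u d0M] := pm_exists u pm.
have hd : dangling u d0.
  move: d0u; rewrite inE /dangling => /eqP E; rewrite E eqxx /= -E.
  by case: d0 {E d0M} => g [] /=; rewrite ?(nl g) // eq_sym (nl g).
exists (exist _ d0 hd); split => // d' h; apply: val_inj => /=.
apply: (pm_two pm _ d0u h d0M).
by have := valP d'; rewrite inE /dangling => /andP[].
Qed.

Lemma pickc_spec (col : gE K -> 'I_3) (M : {set gE H}) (d : Dang u) :
  (val d).1 \in M -> (forall d', (val d').1 \in M -> d' = d) ->
  pickc col M = col (val (phi d)).1.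
Proof.
move=> hd uq; rewrite /pickc; case: pickP => [d1 h1|none].
  by rewrite (uq _ h1).
by have := none d; rewrite hd.
Qed.

Lemma col_noloop (col : gE K -> 'I_3) : proper_col col -> forall g : gE K, ends g false != ends g true.
Proof.
move=> pr g; apply/negP => /eqP E.
have ne : (g, false) != (g, true) by apply/eqP => -[].
by have := pr (g, false) (g, true) ne E; rewrite eqxx.
Qed.

Lemma cover3_up (e0 : gE H) (f0 : gE K) (g0 : gE G') (col : gE K -> 'I_3) :
  (forall g : gE H, ends g false != ends g true) -> cubic K -> proper_col col ->
  pm_cover H 4 -> pm_cover G' 4.
Proof.
move=> nl cK pr [Ms [pm cov]].
exists (fun i => lift3 (Ms i) [set g | col g == pickc col (Ms i)]); split.
  move=> i; apply: (lift3_pm e0 f0 g0 (pm i)); first exact: class_pm.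
  have [d [hd uq]] := pm_dang nl (pm i).
  move=> d'; rewrite inE (pickc_spec col hd uq).
  case: (eqVneq d' d) => [->|ne]; first by rewrite hd eqxx.
  have -> : ((val d').1 \in Ms i) = false by apply/negP => h; move: ne; rewrite (uq _ h) eqxx.
  apply/esym/negbTE; apply: pr.
    by apply: contra ne => /eqP /val_inj /(can_inj phiK) ->.
  have := valP (phi d'); have := valP (phi d); rewrite /dangling.
  by move=> /andP[/eqP -> _] /andP[/eqP -> _].
move=> [[y|z]|d].
- by have [i hi] := cov (val y); exists i; rewrite inE.
- have [d' d'v cd'] := colour_at v (col (val z)) cK pr.
  have hd' : dangling v d'.
    move: d'v; rewrite inE /dangling => /eqP E; rewrite E eqxx /= -E.
    by case: d' {E cd'} => g [] /=; rewrite ?(col_noloop pr g) // eq_sym (col_noloop pr g).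
  set dd := psi (exist _ d' hd').
  have [i hi] := cov (val dd).1.
  have [d [hd uq]] := pm_dang nl (pm i).
  exists i; rewrite !inE /= (pickc_spec col hd uq) -(uq _ hi) /dd psiK /= cd'.
  by rewrite eqxx.
- by have [i hi] := cov (val d).1; exists i; rewrite inE.
Qed.
End S3.


Unset Implicit Arguments.
Theorem lemma5p1 (H K : graph) :
  two_connected H -> cubic H -> two_connected K -> cubic K ->
  pm_index H 4 -> three_edge_colourable K ->
  (forall (e : gE H) (f : gE K) (s : bool), pm_index (sum2 e f s) 4) /\
  (forall (u : gV H) (v : gV K) (phi : Dang u -> Dang v),
      bijective phi -> pm_index (sum3 phi) 4).
Proof.
move=> [twoH _ _] cH _ cK [covH lowH] [col pr0].
have pr : proper_col col := pr0.
have ev := even_V cK pr.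
have nlH : forall g : gE H, ends g false != ends g true.
  by move=> g; have [Ms [pm cov]] := covH; have [i hi] := cov g; exact: pm_noloop (pm i) hi.
split.
- move=> e f s; split; first exact: (cover2_up e f s cH cK pr covH).
  by move=> m m4 cov'; apply: (lowH m m4); exact: cover2_down ev cov'.
- move=> u v phi [psi phiK psiK].
  have [Ms [pm _]] := covH.
  have [d0 _] := pm_dang u nlH (pm ord0).
  have [x0 x0u] : exists x0 : gV H, x0 != u.
    have : 0 < #|predC1 u| by rewrite cardC1; move: twoH; case: (#|gV H|) => [|[|n]].
    by move/card_gt0P => [x hx]; exists x.
  pose X0 : Vm u := exist _ x0 x0u.
  split; first exact: (cover3_up phiK psiK (val d0).1 (val (phi d0)).1 (inr d0) nlH cK pr covH).
  move=> m m4 cov'; apply: (lowH 3 isT).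
  exact: (cover3_down (val d0).1 (inr d0) X0 nlH cH ev m4 cov').
Qed.
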